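(* For every integer $n \geq 2$, $$CB_{n+1}(t)=(n+1)B_n(t)+2(n+1)\sum_{i=1}^{n}(t-1)^i B_{n-i}(t).$$
   Context: For $\pi=[\pi_1,\ldots,\pi_n]\in S_n$ (one-line notation), a pair $(\pi_i,\pi_{i+1})$ with $1\le i\le n-1$ is a (regular) bond if $\pi_i-\pi_{i+1}=\pm1$. The pair $(\pi_n,\pi_1)$ is an edge bond if $\pi_n-\pi_1=\pm1$. A cyclic bond is a regular bond or an edge bond. Let $bnd(\pi)$ be the number of regular bonds and $cbnd(\pi)$ the number of cyclic bonds of $\pi$. Define $B_0(t)=CB_0(t)=1$ and for $n\ge1$: $B_n(t)=\sum_{\pi\in S_n}t^{bnd(\pi)}$ and $CB_n(t)=\sum_{\pi\in S_n}t^{cbnd(\pi)}$. By these definitions, each permutation of $S_2$ has $2$ cyclic bonds, so $CB_2(t)=2t^2$, while $B_1(t)=CB_1(t)=1$, $B_2(t)=2t$. *)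

(* Defs.v *)
From mathcomp Require Import all_boot all_order all_algebra all_fingroup.
Set Implicit Arguments. Unset Strict Implicit. Unset Printing Implicit Defensive.
Import GRing.Theory.
Local Open Scope ring_scope.

(* Values are 0-based (i.e. pi_i - 1); bonds only depend on differences. *)
Definition adjn (a b : nat) : bool := (a.+1 == b) || (b.+1 == a).

Definition oneline n (s : 'S_n) : seq nat := [seq val (s i) | i <- enum 'I_n].

Definition bnd_seq (l : seq nat) : nat :=
  if l is x :: t then count id (pairmap adjn x t) else 0.

Definition edge_seq (l : seq nat) : bool :=
  if l is x :: t then adjn (last x t) x else false.

Definition bnd n (s : 'S_n) : nat := bnd_seq (oneline s).
Definition cbnd n (s : 'S_n) : nat := bnd_seq (oneline s) + edge_seq (oneline s).

(* B_0 = CB_0 = 1 holds automatically (S_0 has one element, no bonds). *)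
Definition B (n : nat) : {poly int} := \sum_(s : 'S_n) 'X^(bnd s).
Definition CB (n : nat) : {poly int} := \sum_(s : 'S_n) 'X^(cbnd s).

(* Main.v *)
Require Import Defs.
From mathcomp Require Import all_boot all_order all_algebra all_fingroup.
From mathcomp Require Import zify.
Set Implicit Arguments. Unset Strict Implicit. Unset Printing Implicit Defensive.
Import GRing.Theory.
Local Open Scope ring_scope.

Definition P (m : nat) := permutations (iota 0 m).
Lemma oneline_nth m (s : 'S_m) (i : 'I_m) : nth 0%N (oneline s) i = val (s i).
Proof.
rewrite /oneline (nth_map i) ?size_enum_ord ?ltn_ord //.
by rewrite nth_ord_enum.
Qed.

Lemma size_oneline m (s : 'S_m) : size (oneline s) = m.
Proof. by rewrite size_map size_enum_ord. Qed.

Lemma oneline_inj m : injective (@oneline m).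
Proof.
move=> s t E; apply/permP => i; apply: val_inj.
by rewrite -!oneline_nth E.
Qed.

Lemma oneline_perm m (s : 'S_m) : perm_eq (oneline s) (iota 0 m).
Proof.
rewrite -val_enum_ord.
have -> : oneline s = map val (map s (enum 'I_m)) by rewrite -map_comp.
apply: perm_map.
apply: uniq_perm; first by rewrite map_inj_uniq ?enum_uniq //; exact: perm_inj.
  exact: enum_uniq.
move=> x; rewrite mem_enum inE.
apply/mapP; exists (s^-1 x)%g; first by rewrite mem_enum.
by rewrite permKV.
Qed.

Lemma oneline_surj m (l : seq nat) : perm_eq l (iota 0 m) ->
  exists s : 'S_m, oneline s = l.
Proof.
move=> pl.
have szl : size l = m by rewrite (perm_size pl) size_iota.
have ul : uniq l by rewrite (perm_uniq pl) iota_uniq.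
have lt x : x \in l -> (x < m)%N by rewrite (perm_mem pl) mem_iota.
pose f (i : 'I_m) : 'I_m := insubd i (nth 0%N l i).
have fi : injective f.
  move=> i j; rewrite /f => /(congr1 val); rewrite !insubdK; last first.
  - by apply: lt; rewrite mem_nth // szl.
  - by apply: lt; rewrite mem_nth // szl.
  move/eqP; rewrite nth_uniq ?szl // => /eqP; exact: val_inj.
exists (perm fi).
apply: (@eq_from_nth _ 0%N); first by rewrite size_oneline.
move=> i; rewrite size_oneline => im.
rewrite (oneline_nth _ (Ordinal im)) permE /f insubdK //.
by apply: lt; rewrite mem_nth // szl.
Qed.

Lemma sum_oneline m (F : seq nat -> {poly int}) :
  \sum_(s : 'S_m) F (oneline s) = \sum_(l <- P m) F l.
Proof.
have -> : \sum_(s : 'S_m) F (oneline s) = \sum_(l <- map (@oneline m) (enum 'S_m)) F l.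
  by rewrite big_map enumT.
apply: perm_big; apply: uniq_perm.
- by rewrite map_inj_uniq ?enum_uniq //; exact: oneline_inj.
- exact: permutations_uniq.
move=> l; rewrite mem_permutations; apply/mapP/idP.
  by case=> s _ ->; exact: oneline_perm.
by case/oneline_surj => s <-; exists s; rewrite ?mem_enum.
Qed.

Definition cb (l : seq nat) : nat := (bnd_seq l + edge_seq l)%N.

Lemma bs_cons2 x y t : bnd_seq [:: x, y & t] = (adjn x y + bnd_seq (y :: t))%N.
Proof. by []. Qed.

Lemma bs_rcons y u x :
  bnd_seq (rcons (y :: u) x) = (bnd_seq (y :: u) + adjn (last y u) x)%N.
Proof. by rewrite /= -cats1 pairmap_cat count_cat /= addn0. Qed.

Lemma cb_rot1 l : cb (rot 1 l) = cb l.
Proof.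
case: l => [|x [|y u]] //.
rewrite rot1_cons /cb bs_rcons. rewrite [edge_seq _]/= last_rcons. rewrite [bnd_seq (x :: _)]bs_cons2 /=.
rewrite /=; lia.
Qed.

Lemma cb_rot k l : (k <= size l)%N -> cb (rot k l) = cb l.
Proof.
elim: k => [|k IH] kl; first by rewrite rot0.
by rewrite -add1n rotD // cb_rot1 IH // ltnW.
Qed.

Lemma inP l m : (l \in P m) = perm_eq l (iota 0 m).
Proof. by rewrite mem_permutations. Qed.

Lemma size_inP l m : l \in P m -> size l = m.
Proof. by rewrite inP => /perm_size ->; rewrite size_iota. Qed.

Lemma nth_rot0 k (l : seq nat) : (k < size l)%N -> head 0%N (rot k l) = nth 0%N l k.
Proof.
move=> kl; rewrite -nth0 /rot nth_cat size_drop subn_gt0 kl nth_drop addn0 //.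
Qed.

Lemma rot_P k m : (k <= m)%N -> perm_eq (map (rot k) (P m)) (P m).
Proof.
move=> km; apply: uniq_perm.
- rewrite map_inj_uniq ?permutations_uniq //; exact: rot_inj.
- exact: permutations_uniq.
move=> l; apply/mapP/idP.
  by case=> l' l'P ->; rewrite inP perm_rot -inP.
move=> lP; exists (rotr k l); last by rewrite rotrK.
by rewrite inP perm_rotr -inP.
Qed.

Lemma rev_P m : perm_eq (map rev (P m)) (P m).
Proof.
apply: uniq_perm.
- rewrite map_inj_uniq ?permutations_uniq //; exact: (can_inj revK).
- exact: permutations_uniq.
move=> l; apply/mapP/idP.
  by case=> l' l'P ->; rewrite inP perm_rev -inP.
move=> lP; exists (rev l); last by rewrite revK.
by rewrite inP perm_rev -inP.
Qed.

Lemma rot_sum n (g : seq nat -> {poly int}) :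
  (forall l k, l \in P n.+1 -> (k <= n)%N -> g (rot k l) = g l) ->
  \sum_(l <- P n.+1) g l = n.+1%:R * \sum_(l <- P n.+1 | head 0%N l == n) g l.
Proof.
move=> ginv.
transitivity (\sum_(l <- P n.+1) \sum_(k < n.+1 | nth 0%N l k == n) g l).
  rewrite big_seq [RHS]big_seq; apply: eq_bigr => l lP.
  have sz := size_inP lP.
  have ul : uniq l by move: lP; rewrite inP => /perm_uniq ->; rewrite iota_uniq.
  have nl : n \in l.
    move: lP; rewrite inP => /perm_mem/(_ n) ->; rewrite mem_iota; lia.
  have il : (index n l < n.+1)%N by rewrite -sz index_mem.
  rewrite (big_pred1 (Ordinal il)) // => k /=.
  apply/eqP/eqP => [E|->]; last by rewrite nth_index.
  apply: val_inj => /=.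
  have H := @index_uniq _ 0%N k l; rewrite E in H; rewrite H // sz //.
under eq_bigr do rewrite big_mkcond.
rewrite exchange_big /=.
under eq_bigr do rewrite -big_mkcond /=.
rewrite [X in _ = X * _](_ : _ = \sum_(k < n.+1) 1); last first.
  by rewrite sumr_const card_ord.
rewrite mulr_suml; apply: eq_bigr => k _; rewrite mul1r.
rewrite [RHS](perm_big (map (rot k) (P n.+1))); last first.
  by rewrite perm_sym (rot_P (ltnW (ltn_ord k))).
rewrite big_map.
rewrite big_seq_cond [RHS]big_seq_cond; apply: eq_big => l.
  case lP: (l \in P n.+1) => //=.
  by rewrite nth_rot0 // (size_inP lP).
case/andP => lP _; rewrite ginv // -ltnS; exact: ltn_ord.
Qed.

Lemma perm_cons_iota m t : perm_eq (m :: t) (iota 0 m.+1) = perm_eq t (iota 0 m).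
Proof.
have E : perm_eq (iota 0 m ++ [:: m]) (m :: iota 0 m) by rewrite perm_catC.
by rewrite -addn1 iotaD /= (permPr E) perm_cons.
Qed.

Lemma head_sum m (g : seq nat -> {poly int}) :
  \sum_(l <- P m.+1 | head 0%N l == m) g l = \sum_(t <- P m) g (m :: t).
Proof.
rewrite -big_filter -(big_map (cons m) xpredT g).
apply: perm_big; apply: uniq_perm.
- by rewrite filter_uniq // permutations_uniq.
- by rewrite map_inj_uniq ?permutations_uniq // => a b [].
move=> l; rewrite mem_filter; apply/andP/mapP.
  case=> /eqP hl lP; case: l hl lP => [|x u] /= hl lP.
    by move: (size_inP lP).
  exists u; last by rewrite hl.
  by move: lP; rewrite !inP hl perm_cons_iota.
case=> t tP ->; split => //.
by rewrite inP perm_cons_iota -inP.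
Qed.

Lemma rev_sum m (g : seq nat -> {poly int}) (Q : pred (seq nat)) :
  \sum_(l <- P m | Q l) g l = \sum_(l <- P m | Q (rev l)) g (rev l).
Proof.
rewrite -[in RHS](big_map rev Q g).
by rewrite (perm_big _ (rev_P m)).
Qed.

Lemma bs_rcons2 s y x :
  bnd_seq (rcons (rcons s y) x) = (bnd_seq (rcons s y) + adjn y x)%N.
Proof.
case: s => [|z w] /=; first by rewrite addn0.
by rewrite -[rcons (rcons w y) x]cats1 pairmap_cat count_cat last_rcons /= addn0.
Qed.

Lemma adjnC a b : adjn a b = adjn b a.
Proof. by rewrite /adjn orbC. Qed.

Lemma bs_rev l : bnd_seq (rev l) = bnd_seq l.
Proof.
elim: l => [|x t IH] //; case: t IH => [|y u] IH //.
rewrite rev_cons rev_cons bs_rcons2 -rev_cons IH bs_cons2 adjnC addnC //.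
Qed.

Lemma head_rev (l : seq nat) : head 0%N (rev l) = last 0%N l.
Proof. by case/lastP: l => [|s x] //; rewrite rev_rcons last_rcons. Qed.

Lemma last_rev (l : seq nat) : last 0%N (rev l) = head 0%N l.
Proof. by rewrite -{2}(revK l) head_rev. Qed.

Lemma adjn_top m y : (0 < m)%N -> (y < m)%N -> adjn m y = (y == m.-1).
Proof.
case: m => // m _ ym; rewrite /adjn /= eqSS.
have -> : (m.+2 == y) = false by apply/negbTE; lia.
by [].
Qed.

From mathcomp Require Import ring.

Definition Hs m := \sum_(t <- P m | head 0%N t == m.-1) 'X^(bnd_seq t) : {poly int}.

Lemma BE m : B m = \sum_(t <- P m) 'X^(bnd_seq t).
Proof. by rewrite /B -sum_oneline. Qed.

Lemma CBE m : CB m = \sum_(t <- P m) 'X^(cb t).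
Proof. by rewrite /CB -sum_oneline. Qed.

Lemma inP_props m t : t \in P m ->
  [/\ size t = m, uniq t & forall x, x \in t -> (x < m)%N].
Proof.
move=> tP; split; first exact: size_inP.
  by move: tP; rewrite inP => /perm_uniq ->; rewrite iota_uniq.
by move=> x; move: tP; rewrite inP => /perm_mem/(_ x) ->; rewrite mem_iota.
Qed.

Lemma Hs_rec m : (0 < m)%N -> Hs m.+1 = B m + ('X - 1) * Hs m.
Proof.
move=> m0; rewrite /Hs head_sum BE /=.
rewrite [X in _ * X]big_mkcond mulr_sumr -big_split /=.
rewrite big_seq [RHS]big_seq; apply: eq_bigr => t tP.
have [sz ut lt] := inP_props tP.
case: t tP sz ut lt => [|y u] tP sz ut lt; first by move: m0; rewrite -sz.
change (count id (pairmap adjn m (y :: u))) with (bnd_seq [:: m, y & u]).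
rewrite bs_cons2 adjn_top //; last by apply: lt; rewrite mem_head.
rewrite /=; case: (y == m.-1) => /=.
  by rewrite addnC exprD expr1; ring.
by rewrite add0n mulr0 addr0.
Qed.

Lemma Hs1 : Hs 1 = 1.
Proof. by rewrite /Hs /P /= big_cons big_nil /= addr0 expr0. Qed.

Lemma B0 : B 0 = 1.
Proof. by rewrite BE /P /= big_cons big_nil /= addr0 expr0. Qed.

Lemma S_Hs m : (0 < m)%N ->
  \sum_(1 <= i < m.+1) ('X - 1) ^+ i * B (m - i) = ('X - 1) * Hs m.
Proof.
elim: m => // m IH _.
case: m IH => [|m] IH.
  by rewrite big_nat1 Hs1 subnn B0 expr1 !mulr1.
rewrite big_nat_recl // subn1 /=.
under eq_bigr do rewrite subSS exprS -mulrA.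
rewrite -mulr_sumr IH // [in RHS]Hs_rec //; ring.
Qed.

Lemma cb_top n t : (2 <= n)%N -> t \in P n ->
  'X^(cb (n :: t)) = 'X^(bnd_seq t) + ('X - 1) * (if head 0%N t == n.-1 then 'X^(bnd_seq t) else 0)
     + ('X - 1) * (if last 0%N t == n.-1 then 'X^(bnd_seq t) else 0) :> {poly int}.
Proof.
move=> n2 tP; have [sz ut lt] := inP_props tP.
case: t tP sz ut lt => [|y u] tP sz ut lt; first by move: n2; rewrite -sz.
have yu : y != last y u.
  case: u sz ut {tP lt} => [|z w] sz ut; first by move: n2; rewrite -sz.
  rewrite /=; apply/eqP => E; move: ut; rewrite /= E mem_last //.
rewrite /cb bs_cons2 adjn_top; [|lia|by apply: lt; rewrite mem_head].
rewrite [edge_seq _]/= adjnC adjn_top; [|lia|by apply: lt; rewrite mem_last].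
rewrite /=.
case: eqP => [Ey|_]; case: eqP => [El|_] /=.
- by move: yu; rewrite El Ey eqxx.
- by rewrite addn0 addnC exprD expr1; ring.
- by rewrite add0n addnC exprD expr1; ring.
- by rewrite !addn0 add0n; ring.
Qed.

Lemma L_Hs n : \sum_(t <- P n | last 0%N t == n.-1) 'X^(bnd_seq t) = Hs n.
Proof.
rewrite rev_sum /Hs; apply: eq_big => t; first by rewrite last_rev.
by rewrite bs_rev.
Qed.

Unset Implicit Arguments.
Theorem theorem2p1 (n : nat) (hn : (2 <= n)%N) :
  CB n.+1 = (n.+1)%:R * B n
            + 2%:R * (n.+1)%:R * \sum_(1 <= i < n.+1) ('X - 1) ^+ i * B (n - i).
Proof.
rewrite CBE (rot_sum (g := fun l => 'X^(cb l))); last first.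
  by move=> l k lP kn; rewrite /= cb_rot // (size_inP lP) ltnW.
rewrite head_sum.
rewrite (eq_big_seq _ (fun t tP => cb_top hn tP)) /=.
rewrite !big_split /= -!mulr_sumr -!big_mkcond /= L_Hs -BE.
rewrite S_Hs; last by lia.
rewrite /Hs; ring.
Qed.
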